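(* Let $J\ge 1$, let $\Lambda=\Lambda_0\times\cdots\times\Lambda_J\subset\mathcal{G}$ and $\tilde\Lambda=\tilde\Lambda_0\times\cdots\times\tilde\Lambda_J\subset\mathcal{G}$ be finite product sets with $\Lambda\subseteq\tilde\Lambda$ and $\#(\tilde\Lambda_j\setminus\Lambda_j)=1$ for $j=1,\dots,J$, let $\mathbf{r}\in\ell_2(\mathcal{G})$ with $\operatorname{supp}\mathbf{r}\subseteq\tilde\Lambda$, and let $\alpha\in(0,1)$. Let $\bar\Lambda=\bar\Lambda_0\times\cdots\times\bar\Lambda_J$ be the product set produced by the procedure $\mathrm{Expand}(\mathbf{r},\Lambda,\tilde\Lambda,\alpha)$ described in the context. Then $\|\mathbf{R}_{\bar\Lambda}\mathbf{r}\|\ge\alpha\|\mathbf{r}\|$. Moreover, if $\widehat\Lambda=\widehat\Lambda_0\times\cdots\times\widehat\Lambda_J\subset\mathcal{G}$ is a product set such that $\sum_{j=0}^J\#(\widehat\Lambda_j\setminus\Lambda_j)$ is minimal among all product sets $\Lambda'\subset\mathcal{G}$ satisfying $\|\mathbf{R}_{\Lambda'}\mathbf{r}\|\ge\alpha\|\mathbf{r}\|$, then \[ \sum_{j=0}^J\#(\bar\Lambda_j\setminus\Lambda_j)\le\sum_{j=0}^J\#(\widehat\Lambda_j\setminus\Lambda_j)+J . \]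
   Context: Index sets: $\mathcal{F}=\{\nu\in\mathbb{N}_0^{\mathbb{N}}:\nu_i\neq0$ for only finitely many $i\}$, $\mathcal{S}$ a countable index set, $\mathcal{G}_0=\mathcal{F}\times\mathcal{S}$ (elements written $(\bar\nu,\lambda)$), $\mathcal{G}_j=\mathbb{N}_0$ for $j=1,\dots,J$, and $\mathcal{G}=\mathcal{G}_0\times\mathcal{G}_1\times\cdots\times\mathcal{G}_J$; $\|\cdot\|$ is the $\ell_2(\mathcal{G})$ norm. A product set is a set of the form $\Lambda_0\times\cdots\times\Lambda_J$ with $\Lambda_j\subseteq\mathcal{G}_j$. For $\Lambda\subseteq\mathcal{G}$, $\mathbf{R}_\Lambda$ is the operator on $\ell_2(\mathcal{G})$ multiplying pointwise by the indicator function of $\Lambda$. Contractions: for $\mathbf{v}\in\ell_2(\mathcal{G})$, with entries $\mathbf{v}_{(\bar\nu,\lambda),\nu}$ for $(\bar\nu,\lambda)\in\mathcal{G}_0$, $\nu=(\nu_1,\dots,\nu_J)\in\mathcal{G}_1\times\cdots\times\mathcal{G}_J$, define $\pi^{(0)}_{(\bar\nu,\lambda)}(\mathbf{v})=\big(\sum_{\nu}|\mathbf{v}_{(\bar\nu,\lambda),\nu}|^2\big)^{1/2}$ and, for $j=1,\dots,J$ and $\nu_j\in\mathcal{G}_j$, $\pi^{(j)}_{\nu_j}(\mathbf{v})=\big(\sum_{(\bar\nu,\lambda)\in\mathcal{G}_0}\sum_{\check\nu_j}|\mathbf{v}_{(\bar\nu,\lambda),\nu}|^2\big)^{1/2}$,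 where $\check\nu_j=(\nu_1,\dots,\nu_{j-1},\nu_{j+1},\dots,\nu_J)$ ranges over $\prod_{i\neq j,\,1\le i\le J}\mathcal{G}_i$. Procedure $\mathrm{Expand}(\mathbf{r},\Lambda,\tilde\Lambda,\alpha)$: (1) Consider the finite family of ''new-index contractions'' consisting of $\pi^{(0)}_{(\bar\nu,\lambda)}(\mathbf{r})$ for $(\bar\nu,\lambda)\in\tilde\Lambda_0\setminus\Lambda_0$ and $\pi^{(j)}_{\nu_j}(\mathbf{r})$ for $\nu_j\in\tilde\Lambda_j\setminus\Lambda_j$, $j=1,\dots,J$, each associated with its mode $j$ and index; arrange them in nonincreasing order $\pi^*_1\ge\pi^*_2\ge\cdots$. (2) Let $M$ be the smallest nonnegative integer with $\sum_{n=1}^M|\pi^*_n|^2+\|\mathbf{R}_\Lambda\mathbf{r}\|^2\ge\alpha^2\|\mathbf{r}\|^2$. (3) For $j=0,\dots,J$ let $\Lambda^{\min}_j$ be $\Lambda_j$ together with the mode-$j$ indices associated with $\pi^*_1,\dots,\pi^*_M$, and $\Lambda^{\min}=\Lambda^{\min}_0\times\cdots\times\Lambda^{\min}_J$. (4) If $\|\mathbf{R}_{\Lambda^{\min}}\mathbf{r}\|\ge\alpha\|\mathbf{r}\|$, output $\bar\Lambda=\Lambda^{\min}$. (5) Otherwise set $\bar\Lambda_j=\tilde\Lambda_j$ for $j=1,\dots,J$; arrange the values $\pi^{(0)}_{(\bar\nu,\lambda)}(\mathbf{r})$, $(\bar\nu,\lambda)\in\tilde\Lambda_0\setminus\Lambda_0$,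 in nonincreasing order $\pi^{**}_1\ge\pi^{**}_2\ge\cdots$; let $K$ be the smallest nonnegative integer with $\sum_{n=1}^K|\pi^{**}_n|^2+\sum_{(\bar\nu,\lambda)\in\Lambda_0}|\pi^{(0)}_{(\bar\nu,\lambda)}(\mathbf{r})|^2\ge\alpha^2\|\mathbf{r}\|^2$; set $\bar\Lambda_0=\Lambda_0\cup\{$indices associated with $\pi^{**}_1,\dots,\pi^{**}_K\}$, and output $\bar\Lambda=\bar\Lambda_0\times\cdots\times\bar\Lambda_J$. *)

(* Defs.v *)
From HB Require Import structures.
From mathcomp Require Import all_boot all_order all_algebra finmap.
From mathcomp Require Import boolp classical_sets fsbigop.
Set Implicit Arguments. Unset Strict Implicit. Unset Printing Implicit Defensive.
Import Order.TTheory GRing.Theory Num.Theory.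
Local Open Scope classical_set_scope.
Local Open Scope ring_scope.

(* F = { nu in N_0^N : nu_i <> 0 for finitely many i }, encoded canonically
   as the sequence (nu_1, ..., nu_m) with no trailing zeros (nu_i = 0 for i > m). *)
Definition Fidx := {s : seq nat | last 1%N s != 0%N}.

Section Defs.
Variables (S : countType) (J : nat).

(* G_0 = F x S ; multi-index nu = (nu_1,...,nu_J), mode j (1 <= j <= J) is the
   ordinal j-1 : 'I_J ; G = G_0 x G_1 x ... x G_J. *)
Definition G0 := (Fidx * S)%type.
Definition Gidx := (G0 * {ffun 'I_J -> nat})%type.

Definition prodset := ({fset G0} * {ffun 'I_J -> {fset nat}})%type.

Definition in_prod (L : prodset) (x : Gidx) : bool :=
  (x.1 \in L.1) && [forall j, x.2 j \in L.2 j].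

Definition subprod (L L' : prodset) : Prop :=
  (L.1 `<=` L'.1)%fset /\ forall j, (L.2 j `<=` L'.2 j)%fset.

Variable R : rcfType.

Definition restr (P : Gidx -> bool) (v : Gidx -> R) : Gidx -> R :=
  fun x => if P x then v x else 0.

Definition l2n (v : Gidx -> R) : R :=
  Num.sqrt (\sum_(x \in [set: Gidx]) v x ^+ 2).

Definition pi0 (v : Gidx -> R) (g : G0) : R :=
  Num.sqrt (\sum_(x \in [set x : Gidx | x.1 = g]) v x ^+ 2).
Definition pij (v : Gidx -> R) (j : 'I_J) (k : nat) : R :=
  Num.sqrt (\sum_(x \in [set x : Gidx | x.2 j = k]) v x ^+ 2).

(* a contraction together with its mode and index:
   inl g = mode 0, index g ; inr (j, k) = mode j+1, index k *)
Definition cand := (G0 + ('I_J * nat))%type.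

Definition cand_val (v : Gidx -> R) (c : cand) : R :=
  match c with inl g => pi0 v g | inr (j, k) => pij v j k end.

Definition new_cand (L tL : prodset) (c : cand) : bool :=
  match c with
  | inl g => (g \in tL.1) && (g \notin L.1)
  | inr (j, k) => (k \in tL.2 j) && (k \notin L.2 j)
  end.

Definition sqsum (s : seq R) : R := \sum_(a <- s) a ^+ 2.

(* bar L is a possible output of Expand(r, L, tL, alpha)
   (ties in the nonincreasing arrangements are broken arbitrarily). *)
Definition Expand_out (r : Gidx -> R) (L tL : prodset) (alpha : R)
    (barL : prodset) : Prop :=
  exists cs : seq cand,
    [/\ uniq cs, (forall c, (c \in cs) = new_cand L tL c),
        sorted (fun a b => cand_val r b <= cand_val r a) cs &
    exists M : nat,
      let P m := alpha ^+ 2 * l2n r ^+ 2 <=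
                 sqsum (map (cand_val r) (take m cs)) + l2n (restr (in_prod L) r) ^+ 2 in
      [/\ P M, (forall m, (m < M)%N -> ~ P m) &
      let inmin (x : Gidx) :=
        ((x.1 \in L.1) || (inl x.1 \in take M cs)) &&
        [forall j, (x.2 j \in L.2 j) || (inr (j, x.2 j) \in take M cs)] in
      (alpha * l2n r <= l2n (restr inmin r) /\
       (forall g, (g \in barL.1) = (g \in L.1) || (inl g \in take M cs)) /\
       (forall j k, (k \in barL.2 j) = (k \in L.2 j) || (inr (j, k) \in take M cs)))
      \/
      (~ (alpha * l2n r <= l2n (restr inmin r)) /\
       (forall j, barL.2 j = tL.2 j) /\
       exists cs0 : seq G0,
         [/\ uniq cs0, (forall g, (g \in cs0) = (g \in tL.1) && (g \notin L.1)),
             sorted (fun a b => pi0 r b <= pi0 r a) cs0 &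
         exists K : nat,
           let Q m := alpha ^+ 2 * l2n r ^+ 2 <=
                      sqsum (map (pi0 r) (take m cs0)) +
                      \sum_(g <- L.1) pi0 r g ^+ 2 in
           [/\ Q K, (forall m, (m < K)%N -> ~ Q m) &
               forall g, (g \in barL.1) = (g \in L.1) || (g \in take K cs0)]])]].

Definition cost (L L' : prodset) : nat :=
  (#|` (L'.1 `\` L.1)%fset| + \sum_(j < J) #|` (L'.2 j `\` L.2 j)%fset|)%N.

End Defs.

(* Main.v *)
Require Import Defs.
From HB Require Import structures.
From mathcomp Require Import all_boot all_order all_algebra finmap.
From mathcomp Require Import boolp classical_sets fsbigop.
Import Order.TTheory GRing.Theory Num.Theory.
Local Open Scope ring_scope.
Set Implicit Arguments.

Lemma conv (R : realDomainType) (T : choiceType) (W : seq T) (f : T -> R) (P : set T) :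
  uniq W -> (forall x, x \notin W -> f x = 0) ->
  \sum_(x \in P) f x = \sum_(x <- W | `[< P x >]) f x.
Proof.
move=> uW fW.
rewrite -(fsbig_widen (P `&` [set` W]) P f); last 2 first.
- by move=> x [].
- move=> x [Px] /=; rewrite /setI /= => H; apply: fW; apply/negP => xW; apply: H; split.
   done. done.
rewrite -[RHS]big_filter; apply: fsbig_fwiden.
- by move=> x [Px xW]; rewrite /= mem_filter xW andbT; apply/asboolP.
- by rewrite filter_uniq.
- move=> x [] /=; rewrite mem_filter => /andP[/asboolP Px xW] H; exfalso; apply: H; by split.
Qed.

Definition bnd (S : countType) (J : nat) (tL : prodset S J) : nat :=
  \max_(j < J) \max_(k <- tL.2 j) k.
Arguments bnd {S J}.

Definition mkf (J n : nat) (g : {ffun 'I_J -> 'I_n}) : {ffun 'I_J -> nat} :=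
  [ffun j => val (g j)].
Arguments mkf {J n}.

Definition Wseq (S : countType) (J : nat) (tL : prodset S J) : seq (Gidx S J) :=
  undup [seq (a, mkf g) | a <- enum_fset tL.1,
          g <- enum {ffun 'I_J -> 'I_(bnd tL).+1}].
Arguments Wseq {S J}.

Lemma mem_W (S : countType) (J : nat) (tL : prodset S J) x :
  in_prod tL x -> x \in Wseq tL.
Proof.
case: x => a f; rewrite /in_prod /= => /andP[ha /forallP hf].
rewrite mem_undup.
have hb : forall j, (f j < (bnd tL).+1)%N.
  move=> j; rewrite ltnS /bnd.
  apply: leq_trans (leq_bigmax_cond j isT).
  exact: (leq_bigmax_seq _ (hf j)).
have -> : f = mkf [ffun j => Ordinal (hb j)].
  by apply/ffunP => j; rewrite !ffunE.
apply: (allpairs_f (fun a g => (a, mkf g))) => //.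
by rewrite mem_enum.
Qed.

Lemma exch (R : realDomainType) (T C : Type) (W : seq T) (s : seq C) (p : pred C)
  (m : C -> T -> bool) (f : T -> R) :
  \sum_(c <- s | p c) \sum_(x <- W | m c x) f x =
  \sum_(x <- W) (count (fun c => p c && m c x) s)%:R * f x.
Proof.
elim: s => [|c s IH].
  rewrite big_nil; symmetry; apply: big1 => x _ /=; exact: mul0r.
rewrite big_cons IH /=.
under [RHS]eq_bigr => x _ do rewrite natrD mulrDl.
rewrite big_split /=; case: (p c) => /=; last first.
  by rewrite [X in _ = X + _]big1 ?add0r // => x _; rewrite mul0r.
congr (_ + _); rewrite big_mkcond; apply: eq_bigr => x _.
by case: (m c x); rewrite ?mul1r ?mul0r.
Qed.

Lemma bnd_up (R : realDomainType) (T : Type) (W : seq T) (P : pred T) (a : T -> nat)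
  (f : T -> R) : (forall x, 0 <= f x) -> (forall x, f x != 0 -> P x -> (0 < a x)%N) ->
  \sum_(x <- W | P x) f x <= \sum_(x <- W) (a x)%:R * f x.
Proof.
move=> f0 ha; rewrite big_mkcond; apply: ler_sum => x _.
case: ifP => Px; last by rewrite mulr_ge0.
have [->|fx] := eqVneq (f x) 0; first by rewrite mulr0.
have := ha x fx Px; case: (a x) => // n _.
rewrite -[leLHS]mul1r ler_wpM2r // ler1n //.
Qed.

Lemma bnd_dn (R : realDomainType) (T : Type) (W : seq T) (P : pred T) (a : T -> nat)
  (f : T -> R) : (forall x, 0 <= f x) ->
  (forall x, f x != 0 -> (a x <= 1)%N /\ ((0 < a x)%N -> P x)) ->
  \sum_(x <- W) (a x)%:R * f x <= \sum_(x <- W | P x) f x.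
Proof.
move=> f0 ha; rewrite [leRHS]big_mkcond; apply: ler_sum => x _.
have [->|fx] := eqVneq (f x) 0; first by rewrite mulr0; case: ifP.
have [h1 h2] := ha x fx.
move: h1 h2; case: (a x) => [|[|n]] // _.
  by rewrite mul0r; case: ifP.
by move=> /(_ isT) ->; rewrite mul1r.
Qed.

Lemma dom0 (R : realDomainType) (T : eqType) (s : seq T) (w : T -> R) (C : pred T) :
  (forall x, 0 <= w x) -> sorted (fun a b => w b <= w a) s ->
  \sum_(x <- s | C x) w x <= \sum_(x <- take (count C s) s) w x.
Proof.
move=> w0; elim: s => [|a s IH] /=; first by rewrite !big_nil.
move=> hs.
have hs' : sorted (fun a b => w b <= w a) s := path_sorted hs.
have hall : forall y, y \in s -> w y <= w a.
  move=> y ys; have := order_path_min _ hs.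
  move=> /(_ _) /allP; apply => //.
  by move=> x1 y1 z1 /= h1 h2; apply: le_trans h1.
have IH' := IH hs'.
rewrite big_cons; case: (C a) => /=.
  rewrite /= big_cons lerD2l; exact: IH'.
rewrite add0n; case: (count C s) IH' => [|k] IH'.
  by rewrite take0 big_nil; move: IH'; rewrite take0 big_nil.
rewrite big_cons; apply: (le_trans IH').
rewrite -addn1 takeD big_cat /= addrC lerD2r.
case E: (drop k s) => [|y t] /=; first by rewrite big_nil.
rewrite take0 big_cons big_nil addr0; apply: hall.
by rewrite -(cat_take_drop k s) mem_cat E inE eqxx orbT.
Qed.

Lemma dom (R : realDomainType) (T : eqType) (s : seq T) (v : T -> R) (C : pred T) (n : nat) :
  (forall x, 0 <= v x) -> sorted (fun a b => v b <= v a) s -> (count C s <= n)%N ->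
  \sum_(x <- s | C x) v x ^+ 2 <= \sum_(x <- take n s) v x ^+ 2.
Proof.
move=> v0 hs hc.
have hs2 : sorted (fun a b => v b ^+ 2 <= v a ^+ 2) s.
  by apply: sub_sorted hs => a b /=; rewrite ler_sqr ?nnegrE.
have := @dom0 R T s (fun x => v x ^+ 2) C (fun x => sqr_ge0 (v x)) hs2 => /= H; apply: (le_trans H).
rewrite -(subnKC hc) takeD big_cat /= lerDl.
by apply: sumr_ge0 => x _; apply: sqr_ge0.
Qed.

Lemma fs_ge0 (R : realDomainType) (T : choiceType) (P : set T) (f : T -> R) :
  0 <= \sum_(x \in P) f x ^+ 2.
Proof. by apply: fsumr_ge0 => x _; apply: sqr_ge0. Qed.

Lemma l2n_sqP (S : countType) (J : nat) (R : rcfType) (W : seq (Gidx S J))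
  (r : Gidx S J -> R) (P : pred (Gidx S J)) :
  uniq W -> (forall x, x \notin W -> r x = 0) ->
  l2n (restr P r) ^+ 2 = \sum_(x <- W | P x) r x ^+ 2.
Proof.
move=> uW hW; rewrite /l2n sqr_sqrtr ?fs_ge0 //.
rewrite (@conv R _ W (fun x => restr P r x ^+ 2) setT) //; last first.
  by move=> x /hW; rewrite /restr => ->; case: ifP; rewrite expr0n.
rewrite big_mkcond [RHS]big_mkcond; apply: eq_bigr => x _.
have -> : `[< @setT (Gidx S J) x >] = true by apply/asboolP.
rewrite /restr; case: ifP => // _; by rewrite expr0n.
Qed.

Lemma l2n_sq (S : countType) (J : nat) (R : rcfType) (W : seq (Gidx S J))
  (r : Gidx S J -> R) :
  uniq W -> (forall x, x \notin W -> r x = 0) ->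
  l2n r ^+ 2 = \sum_(x <- W) r x ^+ 2.
Proof.
move=> uW hW; rewrite /l2n sqr_sqrtr ?fs_ge0 //.
rewrite (@conv R _ W (fun x => r x ^+ 2) _) //; last first.
  by move=> x /hW ->; rewrite expr0n.
by apply: eq_bigl => x; apply/asboolP.
Qed.

Lemma pi0_sq (S : countType) (J : nat) (R : rcfType) (W : seq (Gidx S J))
  (r : Gidx S J -> R) g :
  uniq W -> (forall x, x \notin W -> r x = 0) ->
  pi0 r g ^+ 2 = \sum_(x <- W | x.1 == g) r x ^+ 2.
Proof.
move=> uW hW; rewrite /pi0 sqr_sqrtr ?fs_ge0 //.
rewrite (@conv R _ W (fun x => r x ^+ 2) _) //; last first.
  by move=> x /hW ->; rewrite expr0n.
apply: eq_bigl => x; apply/asboolP/eqP => //.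
Qed.

Lemma pij_sq (S : countType) (J : nat) (R : rcfType) (W : seq (Gidx S J))
  (r : Gidx S J -> R) j k :
  uniq W -> (forall x, x \notin W -> r x = 0) ->
  pij r j k ^+ 2 = \sum_(x <- W | x.2 j == k) r x ^+ 2.
Proof.
move=> uW hW; rewrite /pij sqr_sqrtr ?fs_ge0 //.
rewrite (@conv R _ W (fun x => r x ^+ 2) _) //; last first.
  by move=> x /hW ->; rewrite expr0n.
apply: eq_bigl => x; apply/asboolP/eqP => //.
Qed.

Definition candset (S : countType) (J : nat) (L L' : prodset S J) : seq (cand S J) :=
  [seq (inl g : cand S J) | g <- enum_fset (L'.1 `\` L.1)%fset] ++
  [seq (inr (j, k) : cand S J) | j <- index_enum 'I_J, k <- enum_fset (L'.2 j `\` L.2 j)%fset].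

Definition candin (S : countType) (J : nat) (L L' : prodset S J) (c : cand S J) : bool :=
  match c with
  | inl g => (g \in L'.1) && (g \notin L.1)
  | inr (j, k) => (k \in L'.2 j) && (k \notin L.2 j)
  end.

Lemma candset_size (S : countType) (J : nat) (L L' : prodset S J) :
  size (candset L L') = cost L L'.
Proof.
rewrite /candset size_cat size_map size_allpairs_dep /cost; congr (_ + _)%N.
by rewrite sumnE big_map.
Qed.

Lemma mem_candset (S : countType) (J : nat) (L L' : prodset S J) c :
  (c \in candset L L') = candin L L' c.
Proof.
rewrite /candset mem_cat; case: c => [g|[j k]] /=.
  rewrite mem_map; last by move=> a b [->].
  have -> : (inl g \in [seq (inr (j, k) : cand S J) | j <- index_enum 'I_J, k <- enum_fset (L'.2 j `\` L.2 j)%fset]) = false.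
    by apply/negP => /allpairsPdep [j [k [_ _ ]]].
  by rewrite orbF inE andbC.
have -> : (inr (j, k) \in [seq (inl g : cand S J) | g <- enum_fset (L'.1 `\` L.1)%fset]) = false.
  by apply/negP => /mapP [g _].
rewrite /=; apply/allpairsPdep/idP.
  by move=> [j' [k' [_ hk [-> ->]]]]; move: hk; rewrite inE andbC.
move=> h; exists j, k; split => //; first by rewrite mem_index_enum.
by rewrite inE andbC.
Qed.

Lemma candset_uniq (S : countType) (J : nat) (L L' : prodset S J) :
  uniq (candset L L').
Proof.
rewrite /candset cat_uniq; apply/and3P; split.
- by rewrite map_inj_uniq ?fset_uniq // => a b [].
- apply/hasPn => c /allpairsPdep [j [k [_ _ ->]]]; apply/negP => /mapP [g _] //.
- apply: allpairs_uniq_dep; first exact: index_enum_uniq.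
    by move=> j _; exact: fset_uniq.
  move=> [j k] [j' k'] _ _ /= [e1 e2]; subst; by [].
Qed.

Definition mtc (S : countType) (J : nat) (c : cand S J) (x : Gidx S J) : bool :=
  match c with inl g => x.1 == g | inr (j, k) => x.2 j == k end.

Lemma sum_ind (R : realDomainType) (T : Type) (W : seq T) (P : pred T) (f : T -> R) :
  \sum_(x <- W) (nat_of_bool (P x))%:R * f x = \sum_(x <- W | P x) f x.
Proof.
rewrite [RHS]big_mkcond; apply: eq_bigr => x _; case: (P x); by rewrite ?mul1r ?mul0r.
Qed.

Unset Implicit Arguments.

Theorem theorem4p4 (R : rcfType) (S : countType) (J : nat) (hJ : (1 <= J)%N)
    (L tL : prodset S J) (r : Gidx S J -> R) (alpha : R)
    (hsub : subprod L tL)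
    (hone : forall j : 'I_J, #|` (tL.2 j `\` L.2 j)%fset| = 1%N)
    (hsupp : forall x, r x != 0 -> in_prod tL x)
    (halpha : 0 < alpha < 1)
    (barL : prodset S J) (hE : Expand_out r L tL alpha barL) :
  alpha * l2n r <= l2n (restr (in_prod barL) r) /\
  forall hatL : prodset S J,
    alpha * l2n r <= l2n (restr (in_prod hatL) r) ->
    (forall L' : prodset S J, alpha * l2n r <= l2n (restr (in_prod L') r) ->
       (cost L hatL <= cost L L')%N) ->
    (cost L barL <= cost L hatL + J)%N.
Proof.
set W := Wseq tL.
have uW : uniq W by rewrite /W /Wseq undup_uniq.
have hW : forall x, x \notin W -> r x = 0.
  move=> x xW; apply/eqP; apply: contraNT xW => /hsupp; exact: mem_W.
have r2 : forall x, 0 <= r x ^+ 2 by move=> x; apply: sqr_ge0.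
have Hsq := fun P => l2n_sqP R W r P uW hW.
have H0 := l2n_sq R W r uW hW.
have l2n0 : forall v : Gidx S J -> R, 0 <= l2n v by move=> v; rewrite /l2n sqrtr_ge0.
case/andP: halpha => a0 a1.
have keyP : forall P, (alpha * l2n r <= l2n (restr P r)) =
    (alpha ^+ 2 * l2n r ^+ 2 <= \sum_(x <- W | P x) r x ^+ 2).
  have al0 : 0 <= alpha * l2n r by rewrite mulr_ge0 ?l2n0 // ltW.
  move=> P; have := l2n0 (restr P r) => h.
  by rewrite -Hsq -exprMn ler_sqr // nnegrE.
have cv0 : forall c, 0 <= cand_val r c by case=> [g|[j k]]; rewrite /= ?/pi0 ?/pij sqrtr_ge0.
have cv2 : forall c, cand_val r c ^+ 2 = \sum_(x <- W | mtc c x) r x ^+ 2.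
  by case=> [g|[j k]] /=; [exact: pi0_sq R W r g uW hW | exact: pij_sq R W r j k uW hW].
have rnz : forall x, r x ^+ 2 != 0 -> in_prod tL x.
  by move=> x; rewrite sqrf_eq0; exact: hsupp.
case: hE => cs [ucs mcs scs [M [PM minM Hcase]]].
move: Hcase => /= -[[hmin [hb1 hb2]]|[hnmin [hb2 [cs0 [ucs0 mcs0 scs0 [K [QK minK hb1]]]]]]].
- split.
    have -> : in_prod barL = (fun x : Gidx S J => ((x.1 \in L.1) || (inl x.1 \in take M cs)) &&
          [forall j, (x.2 j \in L.2 j) || (inr (j, x.2 j) \in take M cs)]).
      apply/funext => x; rewrite /in_prod hb1; congr (_ && _); apply: eq_forallb => j; by rewrite hb2.
    exact: hmin.
  move=> hatL hhat _.
  set D := candin L hatL.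
  set n := count D cs.
  have hn : (n <= cost L hatL)%N.
    rewrite -candset_size /n -size_filter; apply: uniq_leq_size; first by rewrite filter_uniq.
    by move=> c; rewrite mem_filter mem_candset => /andP[].
  have Pn : alpha ^+ 2 * l2n r ^+ 2 <= sqsum [seq cand_val r i | i <- take n cs] + l2n (restr (in_prod L) r) ^+ 2.
    rewrite keyP in hhat; apply: (le_trans hhat).
    apply: (le_trans (bnd_up R W (in_prod hatL) (fun x => (in_prod L x + count (fun c => D c && mtc c x) cs)%N) (fun x => r x ^+ 2) r2 _)).
      move=> x /rnz hx hh.
      case hL: (in_prod L x) => //=.
      rewrite -has_count; apply/hasP.
      move: hL; rewrite /in_prod; case/nandP.
        move=> h1; exists (inl x.1); first by rewrite mcs /= h1 andbT; case/andP: hx.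
        by rewrite /D /= h1 eqxx !andbT; case/andP: hh.
      rewrite negb_forall => /existsP [j hj].
      exists (inr (j, x.2 j)); first by rewrite mcs /= hj andbT; case/andP: hx => _ /forallP.
      by rewrite /D /= hj eqxx !andbT; case/andP: hh => _ /forallP.
    under eq_bigr => x _ do rewrite natrD mulrDl.
    rewrite big_split /= sum_ind -Hsq [X in X <= _]addrC lerD2r.
    rewrite -(exch R W cs D (@mtc S J) (fun x => r x ^+ 2)).
    under eq_bigr => c _ do rewrite -cv2.
    rewrite /sqsum big_map; exact: (dom R (cand S J) cs (cand_val r) D n cv0 scs (leqnn _)).
  have hMn : (M <= n)%N by rewrite leqNgt; apply/negP => /minM; apply.
  apply: (leq_trans _ (leq_addr J (cost L hatL))).
  apply: leq_trans hn; apply: leq_trans hMn.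
  rewrite -candset_size; apply: (leq_trans (@uniq_leq_size _ (candset L barL) (take M cs) (candset_uniq L barL) _)).
  2: by rewrite size_take; case: ifP => // /negbT; rewrite -leqNgt.
  move=> c; rewrite mem_candset; case: c => [g|[j k]] /= /andP[h1 h2].
    by move: h1; rewrite hb1 (negbTE h2).
  by move: h1; rewrite hb2 (negbTE h2).
- have pi2 : forall g, pi0 r g ^+ 2 = \sum_(x <- W | x.1 == g) r x ^+ 2 :=
    fun g => pi0_sq R W r g uW hW.
  have p0 : forall g, 0 <= pi0 r g by move=> g; rewrite /pi0 sqrtr_ge0.
  split.
    rewrite keyP; apply: (le_trans QK).
    rewrite /sqsum big_map -big_cat /=.
    under eq_bigr => g _ do rewrite pi2.
    rewrite (exch R W (take K cs0 ++ L.1) predT (fun g x => x.1 == g) (fun x => r x ^+ 2)).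
    apply: bnd_dn => // x /rnz hx.
    have us : uniq (take K cs0 ++ L.1).
      rewrite cat_uniq; apply/and3P; split; [exact: take_uniq | | exact: fset_uniq].
      by apply/hasPn => g gL; apply/negP => /mem_take; rewrite mcs0 gL andbF.
    rewrite (eq_count (a2 := pred1 x.1)); last by move=> g /=; rewrite eq_sym.
    rewrite count_uniq_mem //; split; first by case: (_ \in _).
    move=> hin; rewrite /in_prod hb1.
    move: hin; rewrite lt0b mem_cat orbC => -> /=.
    apply/forallP => j; rewrite hb2; by case/andP: hx => _ /forallP.
  move=> hatL hhat _.
  set C := fun g => g \in hatL.1.
  set n := count C cs0.
  have hn : (n <= #|` (hatL.1 `\` L.1)%fset|)%N.
    rewrite /n -size_filter; apply: uniq_leq_size; first by rewrite filter_uniq.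
    move=> g; rewrite mem_filter => /andP[Cg]; rewrite mcs0 => /andP[_ gL].
    by rewrite inE gL; exact: Cg.
  have Qn : alpha ^+ 2 * l2n r ^+ 2 <= sqsum [seq pi0 r i | i <- take n cs0] + \sum_(g <- L.1) pi0 r g ^+ 2.
    rewrite keyP in hhat; apply: (le_trans hhat).
    apply: (le_trans (bnd_up R W (in_prod hatL) (fun x => (count (fun g => predT g && (x.1 == g)) L.1 + count (fun g => C g && (x.1 == g)) cs0)%N) (fun x => r x ^+ 2) r2 _)).
      move=> x /rnz hx hh.
      rewrite addn_gt0 -!has_count; apply/orP.
      case hL: (x.1 \in L.1).
        by left; apply/hasP; exists x.1 => //=.
      right; apply/hasP; exists x.1; first by rewrite mcs0 hL andbT; case/andP: hx.
      by rewrite /C eqxx andbT; case/andP: hh.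
    under eq_bigr => x _ do rewrite natrD mulrDl.
    rewrite big_split -!(exch R W _ _ (fun g x => x.1 == g) (fun x => r x ^+ 2)).
    under [X in _ + X <= _]eq_bigr => g _ do rewrite -pi2.
    under [X in X + _ <= _]eq_bigr => g _ do rewrite -pi2.
    rewrite [X in X <= _]addrC lerD2r /sqsum big_map.
    exact: (dom R (G0 S) cs0 (pi0 r) C n p0 scs0 (leqnn _)).
  have hKn : (K <= n)%N by rewrite leqNgt; apply/negP => /minK; apply.
  rewrite /cost.
  under eq_bigr => j _ do rewrite hb2 hone.
  rewrite big_const_ord iter_addn_0 mul1n leq_add2r.
  apply: (leq_trans _ (leq_addr _ _)).
  apply: leq_trans hn; apply: leq_trans hKn.
  apply: (leq_trans (@uniq_leq_size _ (enum_fset (barL.1 `\` L.1)%fset) (take K cs0) (fset_uniq _) _)).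
    move=> g; rewrite inE => /andP[h2 h1].
    by move: h1; rewrite hb1 (negbTE h2).
  by rewrite size_take; case: ifP => // /negbT; rewrite -leqNgt.
Qed.
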